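(* Let $\mathbf{P_0},\mathbf{P_1}$ be $n\times n$ transition probability matrices of irreducible and aperiodic Markov chains on $n$ states, let $\mathbf{P_t}=(1-t)\mathbf{P_0}+t\mathbf{P_1}$ for $t\in[0,1]$, and let $\pi_t$ be the stationary distribution of $\mathbf{P_t}$. Let $\delta\in(0,1]$ and $\epsilon>0$. Then for every integer $T\ge \frac{2\,t_{mix}^2(\epsilon/2)}{\epsilon\delta}$ and every integer $k$ with $\delta\le k/T\le 1$, $$\|\pi_0\mathbf{P_{1/T}}\mathbf{P_{2/T}}\cdots\mathbf{P_{k/T}}-\pi_{k/T}\|_{TV}\le\epsilon.$$
   Context: Distributions are row vectors; $\|\mu-\nu\|_{TV}=\frac12\|\mu-\nu\|_1$. For an irreducible aperiodic transition matrix $\mathbf{P}$ with stationary distribution $\pi$, $t_{mix}(\mathbf{P},\epsilon)=\inf\{T\in\mathbb{N}: \|\nu\mathbf{P}^T-\pi\|_{TV}\le\epsilon \text{ for all distributions }\nu\}$, and $t_{mix}(\epsilon)=\sup_{s\in[0,1]}t_{mix}(\mathbf{P_s},\epsilon)$. *)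

(* Defs.v *)
From HB Require Import structures.
From mathcomp Require Import all_boot all_order all_algebra.
From mathcomp Require Import all_classical all_reals.
From mathcomp Require Import ereal.
Set Implicit Arguments. Unset Strict Implicit. Unset Printing Implicit Defensive.
Import Order.TTheory GRing.Theory Num.Theory.
Local Open Scope ring_scope.

Section MC.
Variables (R : realType) (n : nat).

Definition is_distr (mu : 'rV[R]_n) : Prop :=
  (forall j, 0 <= mu 0 j) /\ \sum_j mu 0 j = 1.

Definition stochastic (P : 'M[R]_n) : Prop :=
  (forall i j, 0 <= P i j) /\ (forall i, \sum_j P i j = 1).

Definition mxpow (P : 'M[R]_n) (m : nat) : 'M[R]_n := iter m (fun A => A *m P) 1%:M.

Definition irreducible (P : 'M[R]_n) : Prop :=
  forall i j, exists m : nat, 0 < mxpow P m i j.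

Definition aperiodic (P : 'M[R]_n) : Prop :=
  forall i (d : nat), (forall m : nat, (0 < m)%N -> 0 < mxpow P m i i -> (d %| m)%N) -> d = 1%N.

Definition stationary (P : 'M[R]_n) (pi : 'rV[R]_n) : Prop :=
  is_distr pi /\ pi *m P = pi.

Definition tv (mu nu : 'rV[R]_n) : R := 2^-1 * \sum_j `|mu 0 j - nu 0 j|.

Definition mixes (P : 'M[R]_n) (eps : R) (T : nat) : bool :=
  `[< forall pi nu, stationary P pi -> is_distr nu -> tv (nu *m mxpow P T) pi <= eps >].

(* t_mix(P, eps) = inf {T : mixes P eps T}  (0 if the set is empty, which
   never happens for irreducible aperiodic P) *)
Definition tmixP (P : 'M[R]_n) (eps : R) : nat :=
  match pselect (exists T, mixes P eps T) with
  | left h => ex_minn h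
  | right _ => 0%N
  end.

Definition Pint (P0 P1 : 'M[R]_n) (s : R) : 'M[R]_n := (1 - s) *: P0 + s *: P1.

Definition tmix (P0 P1 : 'M[R]_n) (eps : R) : \bar R :=
  ereal_sup [set ((tmixP (Pint P0 P1 s) eps)%:R)%:E | s in `[0, 1]%classic].

Definition evolve (P0 P1 : 'M[R]_n) (T k : nat) (mu : 'rV[R]_n) : 'rV[R]_n :=
  foldl (fun v i => v *m Pint P0 P1 (i%:R / T%:R)) mu (iota 1 k).

End MC.

(* Main.v *)
Require Import Defs.
From HB Require Import structures.
From mathcomp Require Import all_boot all_order all_algebra.
From mathcomp Require Import all_classical all_reals.
From mathcomp Require Import ereal.
From mathcomp Require Import ring lra zify.
From Stdlib Require Import Lia.
Import Order.TTheory GRing.Theory Num.Theory.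
Local Open Scope ring_scope.
Set Implicit Arguments. Unset Strict Implicit. Unset Printing Implicit Defensive.

Section NT.
Local Open Scope nat_scope.
Variable S : nat -> Prop.
Hypothesis Sadd : forall a b, S a -> S b -> S (a + b).
Hypothesis Spos : forall m, S m -> 0 < m.
Hypothesis Sgcd : forall d, (forall m, S m -> d %| m) -> d = 1.

Definition S0 m := m = 0 \/ S m.

Lemma S0add a b : S0 a -> S0 b -> S0 (a + b).
Proof.
case=> [->|Ha]; first by [].
case=> [->|Hb]; first by rewrite addn0; right.
by right; apply: Sadd.
Qed.

Lemma S0mul c b : S b -> S0 (c * b).
Proof.
move=> Hb; elim: c => [|c IH]; first by left.
by rewrite mulSn; apply: S0add => //; right.
Qed.

Lemma S_ex : exists a, S a.
Proof.
apply: contrapT => H.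
have : 2 = 1 by apply: Sgcd => m Sm; case: H; exists m.
by [].
Qed.

Variable a : nat.
Hypothesis Sa : S a.

Definition Res r := exists s, S0 s /\ s = r %[mod a].

Lemma res_all g : 0 < g -> (forall m, g %| m -> Res m) -> forall r, Res r.
Proof.
elim/ltn_ind: g => g IH g0 Hg r.
have [g1|g1] := eqVneq g 1; first by apply: Hg; rewrite g1 dvd1n.
have [b [Sb ngb]] : exists b, S b /\ ~~ (g %| b).
  apply: contrapT => H; move/eqP: g1; apply; apply: Sgcd => m Sm.
  by apply: contrapT => nd; apply: H; exists m; split => //; apply/negP.
set g' := gcdn g b.
have g'g : g' %| g by apply: dvdn_gcdl.
have g'0 : 0 < g' by rewrite gcdn_gt0 g0.
have g'lt : g' < g.
  rewrite ltn_neqAle (dvdn_leq g0 g'g) andbT; apply/eqP => E.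
  by move: ngb; rewrite -E dvdn_gcdr.
apply: (IH g') => // m /dvdnP [k ->].
have [u _ /dvdnP [w Hw]] := Bezoutl b g0.
have [s1 [S1 E1]] := Hg (k * w * g) (dvdn_mull _ (dvdnn g)).
have a0 := Spos Sa.
exists (s1 + a.-1 * (k * u) * b); split.
  by apply: S0add => //; apply: S0mul.
rewrite -modnDml E1 modnDml.
have -> : k * w * g + a.-1 * (k * u) * b = k * g' + (k * u * b) * a.
  rewrite -mulnA -Hw. nia.
by rewrite addnC modnMDl.
Qed.

Lemma res_bound : forall c, exists B, forall r, r < c -> exists s, [/\ S0 s, s <= B & s = r %[mod a]].
Proof.
elim=> [|c [B HB]]; first by exists 0.
have [s [S0s Es]] : Res c.
  apply: (@res_all a (Spos Sa)) => m /dvdnP [k ->]; exists 0; split; first by left.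
  by rewrite modnMl mod0n.
exists (maxn B s) => r; rewrite ltnS leq_eqVlt => /orP [/eqP ->|rc].
  by exists s; split => //; rewrite leq_maxr.
have [s' [? ? ?]] := HB r rc; exists s'; split => //.
by rewrite (leq_trans _ (leq_maxl B s)).
Qed.

Lemma S_large : exists N, forall m, N <= m -> S m.
Proof.
have [B HB] := res_bound a.
exists B.+1 => m Bm.
have a0 := Spos Sa.
have [s [S0s sB Es]] := HB (m %% a) (ltn_pmod m a0).
rewrite modn_mod in Es.
have sm : s <= m by apply: leq_trans sB (ltnW Bm).
have /dvdnP [q Hq] : a %| m - s by rewrite -(eqn_mod_dvd a sm) Es.
have : S0 m.
  have -> : m = s + q * a by rewrite -Hq subnKC.
  by apply: S0add => //; apply: S0mul.
by case=> // m0; rewrite m0 in Bm.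
Qed.
End NT.

Section M.
Variables (R : realType) (n : nat).
Implicit Types (P A B : 'M[R]_n) (mu nu v : 'rV[R]_n).

Lemma mxpowS P m : mxpow P m.+1 = mxpow P m *m P.
Proof. by []. Qed.

Lemma mxpowD P a b : mxpow P (a + b) = mxpow P a *m mxpow P b.
Proof.
elim: b => [|b IH]; first by rewrite addn0 /= mulmx1.
by rewrite addnS !mxpowS IH mulmxA.
Qed.

Lemma stoch_mul A B : stochastic A -> stochastic B -> stochastic (A *m B).
Proof.
move=> [A0 A1] [B0 B1]; split.
  by move=> i j; rewrite mxE; apply: sumr_ge0 => l _; apply: mulr_ge0.
move=> i; under eq_bigr do rewrite mxE.
rewrite exchange_big /= -(A1 i); apply: eq_bigr => l _.
by rewrite -mulr_sumr B1 mulr1.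
Qed.

Lemma stoch1 : stochastic (1%:M : 'M[R]_n).
Proof.
split; first by move=> i j; rewrite mxE ler0n.
move=> i; rewrite (bigD1 i) //= big1 ?addr0; first by rewrite mxE eqxx.
by move=> j /negbTE ji; rewrite mxE eq_sym ji.
Qed.

Lemma stoch_pow P m : stochastic P -> stochastic (mxpow P m).
Proof.
move=> SP; elim: m => [|m IH]; first exact: stoch1.
by rewrite mxpowS; apply: stoch_mul.
Qed.

Lemma distr_mul mu P : is_distr mu -> stochastic P -> is_distr (mu *m P).
Proof.
move=> [m0 m1] [P0 P1]; split.
  by move=> j; rewrite mxE; apply: sumr_ge0 => l _; apply: mulr_ge0.
under eq_bigr do rewrite mxE.
rewrite exchange_big /= -m1; apply: eq_bigr => l _.
by rewrite -mulr_sumr P1 mulr1.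
Qed.

Definition l1 v := \sum_j `|v 0 j|.

Lemma l1_ge0 v : 0 <= l1 v.
Proof. by apply: sumr_ge0. Qed.

Lemma l1_mul v P : stochastic P -> l1 (v *m P) <= l1 v.
Proof.
move=> [P0 P1]; rewrite /l1.
apply: (@le_trans _ _ (\sum_j \sum_l `|v 0 l| * P l j)).
  apply: ler_sum => j _; rewrite mxE.
  apply: (le_trans (ler_norm_sum _ _ _)); apply: ler_sum => l _.
  by rewrite normrM (ger0_norm (P0 _ _)).
rewrite exchange_big /=; apply: ler_sum => l _.
by rewrite -mulr_sumr P1 mulr1.
Qed.

Lemma l1D v w : l1 (v + w) <= l1 v + l1 w.
Proof.
rewrite /l1 -big_split /=; apply: ler_sum => j _; rewrite mxE; exact: ler_normD.
Qed.

Lemma l1Z c v : l1 (c *: v) = `|c| * l1 v.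
Proof. by rewrite /l1 mulr_sumr; apply: eq_bigr => j _; rewrite mxE normrM. Qed.

Lemma l1N v : l1 (- v) = l1 v.
Proof. by apply: eq_bigr => j _; rewrite mxE normrN. Qed.

Lemma l1_distr mu : is_distr mu -> l1 mu = 1.
Proof. by move=> [m0 m1]; rewrite /l1 -m1; apply: eq_bigr => j _; rewrite ger0_norm. Qed.

Lemma tvE mu nu : tv mu nu = 2^-1 * l1 (mu - nu).
Proof. by rewrite /tv /l1; congr (_ * _); apply: eq_bigr => j _; rewrite !mxE. Qed.

Lemma tv_le1 mu nu : is_distr mu -> is_distr nu -> tv mu nu <= 1.
Proof.
move=> Hm Hn; rewrite tvE.
have : l1 (mu - nu) <= 2.
  by apply: (le_trans (l1D _ _)); rewrite l1N !l1_distr.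
move=> h; lra.
Qed.

Lemma Pint_stoch P0 P1 s : stochastic P0 -> stochastic P1 -> 0 <= s <= 1 ->
  stochastic (Pint P0 P1 s).
Proof.
move=> [A0 A1] [B0 B1] /andP [s0 s1]; split.
  move=> i j; rewrite !mxE; apply: addr_ge0; apply: mulr_ge0 => //.
  by rewrite subr_ge0.
move=> i; under eq_bigr do rewrite !mxE.
by rewrite big_split /= -!mulr_sumr A1 B1 !mulr1 subrK.
Qed.

Lemma Pint_diff P0 P1 mu a b : stochastic P0 -> stochastic P1 -> is_distr mu ->
  l1 (mu *m Pint P0 P1 a - mu *m Pint P0 P1 b) <= 2 * `|a - b|.
Proof.
move=> S0 S1 Hm.
have -> : mu *m Pint P0 P1 a - mu *m Pint P0 P1 b = (b - a) *: (mu *m P0 - mu *m P1).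
  rewrite /Pint !mulmxDr -!scalemxAr; apply/matrixP => i j; rewrite !mxE; ring.
rewrite l1Z distrC mulrC; apply: ler_wpM2r => //.
apply: (le_trans (l1D _ _)); rewrite l1N !l1_distr //; exact: distr_mul.
Qed.
End M.

Section M.
Variables (R : realType) (n : nat).
Implicit Types (P A B Q : 'M[R]_n) (mu nu v d : 'rV[R]_n).

Lemma sum_delta (j0 : 'I_n) (F : 'I_n -> R) : \sum_j F j * (j == j0)%:R = F j0.
Proof.
rewrite (bigD1 j0) //= eqxx mulr1 big1 ?addr0 // => j /negbTE ->; by rewrite mulr0.
Qed.

Lemma doeblin Q (j0 : 'I_n) c d : stochastic Q -> (forall i, c <= Q i j0) ->
  \sum_j d 0 j = 0 -> l1 (d *m Q) <= (1 - c) * l1 d.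
Proof.
move=> [Q0 Q1] Qc d0.
pose Q' i j := Q i j - c * (j == j0)%:R.
have Q'0 i j : 0 <= Q' i j.
  rewrite /Q'; case E: (j == j0); last by rewrite mulr0 subr0.
  by move/eqP: E => ->; rewrite mulr1 subr_ge0.
have E j : (d *m Q) 0 j = \sum_i d 0 i * Q' i j.
  rewrite mxE /Q'; under [RHS]eq_bigr do rewrite mulrBr.
  by rewrite sumrB -mulr_suml d0 mul0r subr0.
rewrite /l1.
apply: (@le_trans _ _ (\sum_j \sum_i `|d 0 i| * Q' i j)).
  apply: ler_sum => j _; rewrite E.
  apply: (le_trans (ler_norm_sum _ _ _)); apply: ler_sum => i _.
  by rewrite normrM (ger0_norm (Q'0 _ _)).
rewrite exchange_big /= mulr_sumr; apply: ler_sum => i _.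
rewrite -mulr_sumr mulrC; apply: ler_wpM2r => //.
rewrite /Q' sumrB Q1 -mulr_sumr.
by rewrite (bigD1 j0) //= eqxx big1 ?addr0 ?mulr1 // => j /negbTE ->.
Qed.

End M.

Lemma andP_intro (a b : bool) : a -> b -> a && b. Proof. by move=> -> ->. Qed.
Section M2.
Variables (R : realType) (n : nat).
Implicit Types (P A B Q : 'M[R]_n) (mu nu v d : 'rV[R]_n).

Lemma sum_mul_stoch d Q : stochastic Q -> \sum_j (d *m Q) 0 j = \sum_j d 0 j.
Proof.
move=> [_ Q1]; under eq_bigr do rewrite mxE.
rewrite exchange_big /=; apply: eq_bigr => i _.
by rewrite -mulr_sumr Q1 mulr1.
Qed.

Lemma doeblin_pow Q (j0 : 'I_n) c d k : stochastic Q -> (forall i, c <= Q i j0) -> c <= 1 ->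
  \sum_j d 0 j = 0 -> l1 (d *m mxpow Q k) <= (1 - c) ^+ k * l1 d.
Proof.
move=> SQ Qc c1 d0; elim: k => [|k IH]; first by rewrite /= mulmx1 expr0 mul1r.
rewrite mxpowS mulmxA exprS -[_ * _ * l1 d]mulrA.
apply: (le_trans (doeblin SQ Qc _)).
  by rewrite sum_mul_stoch //; apply: stoch_pow.
by apply: ler_wpM2l => //; rewrite subr_ge0.
Qed.

Lemma mxpowM P M k : mxpow P (M * k) = mxpow (mxpow P M) k.
Proof.
elim: k => [|k IH]; first by rewrite muln0.
by rewrite mulnS addnC mxpowD IH mxpowS.
Qed.

Lemma stat_pow P pi t : stationary P pi -> pi *m mxpow P t = pi.
Proof.
move=> [_ Hp]; elim: t => [|t IH]; first by rewrite mulmx1.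
by rewrite mxpowS mulmxA IH Hp.
Qed.

Lemma geom_bound (c : R) k : 0 <= c <= 1 -> (1 - c) ^+ k * (1 + k%:R * c) <= 1.
Proof.
move=> /andP [c0 c1]; elim: k => [|k IH]; first by rewrite expr0 mul0r addr0 mulr1.
have x0 : 0 <= (1 - c) ^+ k by apply: exprn_ge0; rewrite subr_ge0.
rewrite exprS -natr1; move: IH x0; set x := (1 - c) ^+ k; set K := k%:R.
have K0 : 0 <= K by rewrite ler0n.
move=> IH x0.
have : 0 <= x * (c * (K * c + c)) by rewrite !mulr_ge0 // addr_ge0 // mulr_ge0.
nra.
Qed.

Lemma mix_exists P e : stochastic P -> 0 < e ->
  (exists M (j0 : 'I_n) c, 0 < c /\ forall i, c <= mxpow P M i j0) -> exists T, mixes P e T.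
Proof.
move=> SP e0 [M [j0 [c [c0 Hc]]]].
have SQ := stoch_pow M SP.
have c1 : c <= 1.
  apply: (le_trans (Hc j0)); case: SQ => Q0 Q1; rewrite -(Q1 j0).
  rewrite (bigD1 j0) //= lerDl; apply: sumr_ge0 => *; exact: Q0.
have kc0 : 0 <= (e * c)^-1 by rewrite invr_ge0 mulr_ge0 // ltW.
set k := Num.Def.archi_bound (e * c)^-1.
have Hk : (e * c)^-1 < k%:R by apply: archi_boundP.
exists (M * k); apply/asboolP => p nu Hp Hnu.
rewrite tvE mxpowM.
have -> : nu *m mxpow (mxpow P M) k - p = (nu - p) *m mxpow (mxpow P M) k.
  by rewrite mulmxBl -mxpowM (stat_pow _ Hp).
have d0 : \sum_j (nu - p) 0 j = 0.
  under eq_bigr do rewrite !mxE.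
  by rewrite sumrB (proj2 Hnu) (proj2 (proj1 Hp)) subrr.
have H1 := doeblin_pow k SQ Hc c1 d0.
have H2 : l1 (nu - p) <= 2.
  have Hpd : is_distr p := proj1 Hp.
  by apply: (le_trans (l1D _ _)); rewrite l1N !l1_distr.
have H3 := @geom_bound c k (andP_intro (ltW c0) c1).
set x := (1 - c) ^+ k in H1 H3.
have x0 : 0 <= x by apply: exprn_ge0; rewrite subr_ge0.
have H4 : 1 <= k%:R * c * e.
  have ec0 : 0 < e * c by apply: mulr_gt0.
  move: Hk; rewrite -(ltr_pM2l ec0) mulfV ?gt_eqF // => h; nra.
have := l1_ge0 ((nu - p) *m mxpow (mxpow P M) k).
have := l1_ge0 (nu - p).
nra.
Qed.
End M2.

Section M3.
Variables (R : realType) (n : nat).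
Implicit Types (P A B Q : 'M[R]_n) (mu nu v d : 'rV[R]_n).

Lemma entry_le1 P i j : stochastic P -> P i j <= 1.
Proof.
case=> P0 P1; rewrite -(P1 i) (bigD1 j) //= lerDl; apply: sumr_ge0 => *; exact: P0.
Qed.

Lemma pow_pos_trans P a b i l j : stochastic P -> 0 < mxpow P a i l -> 0 < mxpow P b l j ->
  0 < mxpow P (a + b) i j.
Proof.
move=> SP h1 h2; rewrite mxpowD mxE (bigD1 l) //=.
apply: (lt_le_trans (mulr_gt0 h1 h2)); rewrite lerDl; apply: sumr_ge0 => k _.
by apply: mulr_ge0; [case: (stoch_pow a SP) | case: (stoch_pow b SP)].
Qed.

Lemma doeblin_cond P (j0 : 'I_n) : stochastic P -> irreducible P -> aperiodic P ->
  exists M (j1 : 'I_n) c, 0 < c /\ forall i, c <= mxpow P M i j1.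
Proof.
move=> SP IP AP.
pose S m := (0 < m)%N /\ 0 < mxpow P m j0 j0.
have Sadd a b : S a -> S b -> S (a + b).
  move=> [a0 ha] [b0 hb]; split; first by rewrite addn_gt0 a0.
  exact: pow_pos_trans ha hb.
have Spos m : S m -> (0 < m)%N by case.
have Sgcd (dd : nat) : (forall m, S m -> (dd %| m)%N) -> dd = 1%N.
  by move=> H; apply: (AP j0) => m m0 hm; apply: H.
have [a Sa] := S_ex Sgcd.
have [N HN] := S_large Sadd Spos Sgcd Sa.
have [f Hf] : exists f : 'I_n -> nat, forall i, 0 < mxpow P (f i) i j0.
  by apply: (@fin_all_exists _ (fun _ => nat) (fun i m => 0 < mxpow P m i j0)) => i; apply: IP.
pose M := (N + \max_i f i)%N.
have HM i : 0 < mxpow P M i j0.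
  have fi : (f i <= \max_i f i)%N by apply: leq_bigmax.
  have -> : M = (f i + (N + \max_i f i - f i))%N.
    by rewrite /M; lia.
  apply: (pow_pos_trans SP (Hf i)); apply: (proj2 (HN _ _)).
  by rewrite -addnBA // leq_addr.
exists M, j0, (\prod_i mxpow P M i j0); split.
  by apply: prodr_gt0 => i _; apply: HM.
move=> i; rewrite (bigD1 i) //= ler_piMr //.
  by apply: ltW.
apply: prodr_ile1 => k _; rewrite entry_le1 ?andbT; last exact: stoch_pow.
exact: ltW.
Qed.

Lemma mix_exists_irr P e : stochastic P -> irreducible P -> aperiodic P -> 0 < e ->
  exists T, mixes P e T.
Proof.
move=> SP IP AP e0.
case: (pickP (@predT 'I_n)) => [j0 _|none].
  by apply: mix_exists => //; apply: doeblin_cond.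
exists 0%N; apply/asboolP => p nu _ _.
by rewrite /tv big1 ?mulr0 ?ltW // => j; have := none j.
Qed.
End M3.

Section M4.
Variables (R : realType) (n : nat).
Implicit Types (P A B Q : 'M[R]_n) (mu nu v d : 'rV[R]_n).

Lemma tmix_fin P0 P1 e (x : R) (T : nat) :
  (tmix P0 P1 e * tmix P0 P1 e * x%:E <= (T%:R : R)%:E)%E -> 0 < x ->
  exists r : R, [/\ 0 <= r, r * r * x <= T%:R &
    forall s, 0 <= s <= 1 -> (tmixP (Pint P0 P1 s) e)%:R <= r].
Proof.
move=> H x0.
have ub s : 0 <= s <= 1 -> (((tmixP (Pint P0 P1 s) e)%:R : R)%:E <= tmix P0 P1 e)%E.
  by move=> hs; apply: ereal_sup_ubound; exists s => //=.
have t0 : (0 <= tmix P0 P1 e)%E.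
  apply: le_trans (ub 0 _); first by rewrite lee_fin ler0n.
  by rewrite lexx ler01.
move: H ub t0; case: (tmix P0 P1 e) => [r| |] H ub t0.
- exists r; split.
  + by rewrite -lee_fin.
  + by rewrite -lee_fin !EFinM.
  + by move=> s hs; rewrite -lee_fin; apply: ub.
- by move: H; rewrite mulyy gt0_mulye ?lte_fin // leye_eq.
- by [].
Qed.
End M4.

Section M5.
Variables (R : realType) (n : nat).
Implicit Types (P A B Q : 'M[R]_n) (mu nu v d : 'rV[R]_n).

Lemma Pint_ge P0 P1 (s : R) m i j : stochastic P0 -> stochastic P1 -> 0 < s <= 1 ->
  s ^+ m * mxpow P1 m i j <= mxpow (Pint P0 P1 s) m i j.
Proof.
move=> S0 S1 /andP [s0 s1]; elim: m i j => [|m IH] i j; first by rewrite expr0 mul1r.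
rewrite !mxpowS !mxE exprSr mulr_sumr; apply: ler_sum => l _.
have e1 : 0 <= mxpow P1 m i l by case: (stoch_pow m S1).
have e2 : 0 <= P1 l j by case: S1.
have e3 : 0 <= P0 l j by case: S0.
rewrite -mulrA [s * _]mulrC !mulrA -mulrA; apply: ler_pM.
- by rewrite mulr_ge0 // exprn_ge0 // ltW.
- by rewrite mulr_ge0 // ltW.
- exact: IH.
- by rewrite mulrC !mxE lerDr mulr_ge0 // subr_ge0.
Qed.

Lemma Pint_irr P0 P1 (s : R) : stochastic P0 -> stochastic P1 -> 0 < s <= 1 ->
  irreducible P1 -> irreducible (Pint P0 P1 s).
Proof.
move=> S0 S1 hs I1 i j; have [m hm] := I1 i j; exists m.
apply: lt_le_trans (Pint_ge m i j S0 S1 hs); apply: mulr_gt0 => //.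
by apply: exprn_gt0; case/andP: hs.
Qed.

Lemma Pint_aper P0 P1 (s : R) : stochastic P0 -> stochastic P1 -> 0 < s <= 1 ->
  aperiodic P1 -> aperiodic (Pint P0 P1 s).
Proof.
move=> S0 S1 hs A1 i d H; apply: (A1 i) => m m0 hm; apply: H => //.
apply: lt_le_trans (Pint_ge m i i S0 S1 hs); apply: mulr_gt0 => //.
by apply: exprn_gt0; case/andP: hs.
Qed.

Definition stepf P0 P1 (T : nat) := fun (v : 'rV[R]_n) (i : nat) => v *m Pint P0 P1 (i%:R / T%:R).

Lemma foldl_distr P0 P1 T l mu : stochastic P0 -> stochastic P1 ->
  (forall i, i \in l -> 0 <= (i%:R / T%:R : R) <= 1) -> is_distr mu ->
  is_distr (foldl (stepf P0 P1 T) mu l).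
Proof.
move=> S0 S1; elim: l mu => [|x l IH] mu //= Hl Hm.
apply: IH; first by move=> i il; apply: Hl; rewrite in_cons il orbT.
apply: distr_mul => //; apply: Pint_stoch => //; apply: Hl; exact: mem_head.
Qed.

Lemma foldl_compare P0 P1 T l mu (s b : R) : stochastic P0 -> stochastic P1 ->
  0 <= s <= 1 ->
  (forall i, i \in l -> 0 <= (i%:R / T%:R : R) <= 1 /\ `|i%:R / T%:R - s| <= b) -> is_distr mu ->
  l1 (foldl (stepf P0 P1 T) mu l - mu *m mxpow (Pint P0 P1 s) (size l)) <= (size l)%:R * (2 * b).
Proof.
move=> S0 S1 hs; elim/last_ind: l => [|l x IH] Hl Hm.
  by rewrite /= mulmx1 subrr mul0r /l1 big1 // => j _; rewrite mxE normr0.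
rewrite foldl_rcons size_rcons mxpowS mulmxA /stepf -/(stepf P0 P1 T).
have Hl' i : i \in l -> 0 <= (i%:R / T%:R : R) <= 1 /\ `|i%:R / T%:R - s| <= b.
  by move=> il; apply: Hl; rewrite mem_rcons in_cons il orbT.
have [hx bx] : 0 <= (x%:R / T%:R : R) <= 1 /\ `|x%:R / T%:R - s| <= b.
  by apply: Hl; rewrite mem_rcons mem_head.
set X := foldl _ mu l.
have HX : is_distr X by apply: foldl_distr => // i /Hl' [].
have Ss := Pint_stoch S0 S1 hs.
have -> : X *m Pint P0 P1 (x%:R / T%:R) - mu *m mxpow (Pint P0 P1 s) (size l) *m Pint P0 P1 s
  = (X *m Pint P0 P1 (x%:R / T%:R) - X *m Pint P0 P1 s)
    + (X - mu *m mxpow (Pint P0 P1 s) (size l)) *m Pint P0 P1 s.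
  by rewrite mulmxBl addrA subrK.
apply: (le_trans (l1D _ _)).
rewrite -natr1 mulrDl mul1r [Y in _ <= Y]addrC; apply: lerD.
  by apply: (le_trans (Pint_diff _ _ S0 S1 HX)); rewrite ler_wpM2l.
by apply: (le_trans (l1_mul _ Ss)); apply: IH.
Qed.
End M5.

Lemma iota_bounds j t i : i \in iota (1 + j) t -> (i <= j + t)%N /\ (j + t <= i + t)%N.
Proof. rewrite mem_iota => /andP [h1 h2]; split; lia. Qed.

Unset Implicit Arguments.
Theorem theorem2 (R : realType) (n : nat) (P0 P1 : 'M[R]_n)
  (pi : R -> 'rV[R]_n) (delta eps : R) :
  stochastic P0 -> irreducible P0 -> aperiodic P0 ->
  stochastic P1 -> irreducible P1 -> aperiodic P1 ->
  (forall t : R, 0 <= t <= 1 -> stationary (Pint P0 P1 t) (pi t)) ->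
  0 < delta <= 1 -> 0 < eps ->
  forall T k : nat,
    (tmix P0 P1 (eps / 2) * tmix P0 P1 (eps / 2) * ((2 / (eps * delta))%R)%:E
       <= (T%:R : R)%:E)%E ->
    delta <= (k%:R / T%:R : R) <= 1 ->
    tv (evolve P0 P1 T k (pi 0)) (pi (k%:R / T%:R)) <= eps.
Proof.
move=> S0 I0 A0 S1 I1 A1 Hpi /andP [d0 d1] e0 T k HT /andP [dk k1].
have T0 : (0 < T)%N.
  move: dk; case: (T) => // ; rewrite invr0 mulr0 => h.
  by move: (lt_le_trans d0 h); rewrite ltxx.
have TR : (0 : R) < T%:R by rewrite ltr0n.
have kT : (k <= T)%N.
  by move: k1; rewrite ler_pdivrMr // mul1r ler_nat.
set s := (k%:R / T%:R : R) in dk k1 *.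
have hs : 0 < s <= 1 by rewrite k1 (lt_le_trans d0 dk).
have hs' : 0 <= s <= 1 by rewrite k1 (le_trans (ltW d0) dk).
have ed0 : 0 < eps * delta by apply: mulr_gt0.
have x0 : 0 < 2 / (eps * delta) by rewrite divr_gt0.
have [r [r0 hr hub]] := tmix_fin HT x0.
set tau := tmixP (Pint P0 P1 s) (eps / 2).
have Ss := Pint_stoch S0 S1 hs'.
have mixing : mixes (Pint P0 P1 s) (eps / 2) tau.
  have [T' HT'] : exists T', mixes (Pint P0 P1 s) (eps / 2) T'.
    apply: mix_exists_irr => //.
    - exact: Pint_irr.
    - exact: Pint_aper.
    - by rewrite divr_gt0.
  rewrite /tau /tmixP; case: pselect => [h|nh]; last by case: nh; exists T'.
  by case: ex_minnP.
have taur : (tau%:R : R) <= r by apply: hub.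
have hr2 : r * r * 2 <= T%:R * (eps * delta).
  by move: hr; rewrite (mulrA (r * r) 2) ler_pdivrMr.
have tau0 : (0 : R) <= tau%:R by rewrite ler0n.
have key : (tau%:R : R) * tau%:R * 2 <= T%:R * eps.
  have : (tau%:R : R) * tau%:R <= r * r by timeout 20 nra.
  have : T%:R * (eps * delta) <= T%:R * eps by apply: ler_wpM2l; [rewrite ler0n | nra].
  timeout 20 nra.
have key2 : (tau%:R : R) * tau%:R * 2 <= T%:R * (eps * delta).
  have : (tau%:R : R) * tau%:R <= r * r by timeout 20 nra.
  timeout 20 lra.
have pi0 : is_distr (pi 0) by case: (Hpi 0 (andP_intro (lexx 0) ler01)).
have pis : is_distr (pi s) by case: (Hpi s hs').
have range i : (i <= k)%N -> 0 <= (i%:R / T%:R : R) <= 1.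
  move=> ik; apply/andP; split; first by apply: divr_ge0; rewrite ler0n.
  rewrite ler_pdivrMr // mul1r ler_nat; exact: leq_trans ik kT.
have evE : evolve P0 P1 T k (pi 0) = foldl (stepf P0 P1 T) (pi 0) (iota 1 k) by [].
rewrite evE.
have distr_all l mu : (forall i, i \in l -> (i <= k)%N) -> is_distr mu ->
    is_distr (foldl (stepf P0 P1 T) mu l).
  move=> Hl Hm; apply: foldl_distr => // i /Hl; exact: range.
case: (leqP tau k) => [tk|kt].
- pose j := (k - tau)%N.
  have kj : k = (j + tau)%N by rewrite subnK.
  have -> : iota 1 k = iota 1 j ++ iota (1 + j) tau by rewrite -iotaD -kj.
  rewrite foldl_cat.
  set nu := foldl _ (pi 0) (iota 1 j).
  have Hnu : is_distr nu.
    apply: distr_all => // i; rewrite mem_iota add1n ltnS => /andP [_ h].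
    by rewrite kj (leq_trans h (leq_addr _ _)).
  have cond i : i \in iota (1 + j) tau ->
      0 <= (i%:R / T%:R : R) <= 1 /\ `|i%:R / T%:R - s| <= tau%:R / T%:R.
    move=> /iota_bounds [h1 h2]; split; first by apply: range; rewrite kj.
    rewrite /s -mulrBl normrM [`|(T%:R : R)^-1|]ger0_norm ?invr_ge0 ?ler0n //.
    rewrite ler_pM2r ?invr_gt0 // ler_norml.
    have e1 : (i%:R : R) <= k%:R by rewrite ler_nat kj.
    have e2 : (k%:R : R) <= i%:R + tau%:R by rewrite -natrD ler_nat kj.
    apply/andP; split; timeout 20 lra.
  have Hc := foldl_compare S0 S1 hs' cond Hnu.
  rewrite size_iota in Hc.
  move/asboolP: mixing => Hmix.
  have Hm := Hmix (pi s) nu (Hpi s hs') Hnu.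
  set Y := foldl _ nu _ in Hc *.
  set X := nu *m _ in Hc Hm.
  rewrite tvE in Hm; rewrite tvE.
  have Htri : l1 (Y - pi s) <= l1 (Y - X) + l1 (X - pi s).
    have -> : Y - pi s = (Y - X) + (X - pi s).
      by rewrite addrA subrK.
    exact: l1D.
  have hq : (tau%:R : R) * (2 * (tau%:R / T%:R)) <= eps.
    have -> : (tau%:R : R) * (2 * (tau%:R / T%:R)) = (tau%:R * tau%:R * 2) / T%:R by ring.
    by rewrite ler_pdivrMr // [eps * _]mulrC.
  timeout 20 lra.
- have kR : (k%:R : R) + 1 <= tau%:R by rewrite natr1 ler_nat.
  have dT : delta * T%:R <= k%:R by move: dk; rewrite /s ler_pdivlMr.
  have e1 : 1 <= eps.
    have h1 : (tau%:R : R) * tau%:R * 2 <= eps * k%:R.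
      apply: le_trans key2 _; rewrite mulrA [T%:R * eps]mulrC -mulrA.
      by apply: ler_wpM2l; [apply: ltW | rewrite mulrC].
    have h2 : eps * k%:R <= eps * tau%:R.
      by apply: ler_wpM2l; [apply: ltW | timeout 20 lra].
    have k0 : (0 : R) <= k%:R by rewrite ler0n.
    have t1 : (1 : R) <= tau%:R by timeout 20 lra.
    have h3 : (2 * tau%:R) * tau%:R <= eps * tau%:R.
      have -> : (2 * tau%:R) * tau%:R = (tau%:R : R) * tau%:R * 2 by ring.
      exact: le_trans h1 h2.
    move: h3; rewrite ler_pM2r; last by timeout 20 lra.
    timeout 20 lra.
  apply: le_trans e1; apply: tv_le1 => //.
  by apply: distr_all => // i; rewrite mem_iota add1n ltnS => /andP [_].
Qed.
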